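(* Let $\Phi=\sum_{k=1}^{15}\Phi_k$ and $\Phi^*$ be as in the context. For each of the fifteen 8-form terms $e_{\mu_1\mu_2\cdots\mu_8}$ of $\Phi^*$ ($\mu_1<\dots<\mu_8$), consider the seven pairings of its indices $C_1=\{\mu_1\mu_2,\mu_3\mu_4,\mu_5\mu_6,\mu_7\mu_8\}$, $C_2=\{\mu_1\mu_3,\mu_2\mu_4,\mu_5\mu_7,\mu_6\mu_8\}$, $C_3=\{\mu_1\mu_4,\mu_2\mu_3,\mu_5\mu_8,\mu_6\mu_7\}$, $M_1=\{\mu_1\mu_5,\mu_2\mu_6,\mu_3\mu_7,\mu_4\mu_8\}$, $M_2=\{\mu_1\mu_6,\mu_2\mu_5,\mu_3\mu_8,\mu_4\mu_7\}$, $M_3=\{\mu_1\mu_7,\mu_2\mu_8,\mu_3\mu_5,\mu_4\mu_6\}$, $M_4=\{\mu_1\mu_8,\mu_2\mu_7,\mu_3\mu_6,\mu_4\mu_5\}$. For a pairing $\{a_1b_1,a_2b_2,a_3b_3,a_4b_4\}$ ($a_i<b_i$) and a sign pattern $(\epsilon_1,\epsilon_2,\epsilon_3,\epsilon_4)\in\{(+,+,+,+),(+,+,-,-),(+,-,+,-),(+,-,-,+)\}$, put $$R=\tfrac14(1+\epsilon_1e_{a_1b_1})(1+\epsilon_2e_{a_2b_2})(1+\epsilon_3e_{a_3b_3})(1+\epsilon_4e_{a_4b_4}),$$ a product of four commuting $90^\circ$ rotors in $\mathrm{Spin}(15)$. Then $R\Phi R^{-1}=\sum_{k=1}^{15}\eta_k\Phi_k$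 for some signs $\eta_k\in\{\pm1\}$, i.e. conjugation by $R$ permutes the fifteen 7-form terms of $\Phi$ up to sign. This yields $15\times7=105$ distinct quadruples of rotation planes (''primary invariants''), and $420$ invariants when the four sign patterns are included.
   Context: $Cl_{15}$ denotes the real Clifford algebra generated by $e_1,\dots,e_{15}$, with indices written in hexadecimal ($A=10,\dots,F=15$), subject to $e_i^2=+1$ and $e_ie_j=-e_je_i$ for $i\neq j$. For increasing indices $i_1<\dots<i_k$, $e_{i_1\cdots i_k}=e_{i_1}\cdots e_{i_k}$. The fifteen terms $\Phi_k$ of $\Phi$ are the 7-forms $e_{1234567}$, $e_{12389AB}$, $e_{14589CD}$, $e_{16789EF}$, $e_{2468ACE}$, $e_{2578ADF}$, $e_{3478BCF}$, $e_{3568BDE}$, $e_{123CDEF}$, $e_{145ABEF}$, $e_{167ABCD}$, $e_{2469BDF}$, $e_{2579BCE}$, $e_{3479ADE}$, $e_{3569ACF}$. $\Phi^*=-e_{123456789ABCDEF}\Phi$, whose fifteen terms are the 8-forms $e_{12478BDE}$, $e_{12479ACF}$, $e_{12568BCF}$, $e_{12569ADE}$, $e_{13468ADF}$, $e_{13469BCE}$, $e_{13578ACE}$, $e_{13579BDF}$, $e_{234589EF}$, $e_{2345ABCD}$, $e_{236789CD}$, $e_{2367ABEF}$, $e_{456789AB}$, $e_{4567CDEF}$, $e_{89ABCDEF}$. *)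

(* Defs.v *)
From HB Require Import structures.
From mathcomp Require Import all_boot all_order all_algebra.
Set Implicit Arguments. Unset Strict Implicit. Unset Printing Implicit Defensive.
Import Order.TTheory GRing.Theory Num.Theory.
Local Open Scope ring_scope.

Section Cl15.
Variable R : realFieldType.

(* Basis blades of Cl_15 are indexed by subsets of {1..15}; the paper's index
   i (1..15, hex 1..F) is the ordinal i-1 of 'I_15. *)
Definition blade_idx := {set 'I_15}.

(* A multivector: its coordinates on the basis blades e_A
   (e_A = product of the generators in A in increasing order). *)
Notation mv := {ffun blade_idx -> R}.

(* e_A e_B = (-1)^(#{(i,j) : i in A, j in B, j < i}) e_(A symdiff B),
   which is the multiplication of basis blades forced by
   e_i^2 = +1 and e_i e_j = - e_j e_i (i <> j). *)
Definition bsign (A B : blade_idx) : R :=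
  (-1) ^+ #|[set p : 'I_15 * 'I_15 | (p.1 \in A) && (p.2 \in B) && (p.2 < p.1)%N]|.

Definition symdiff (A B : blade_idx) : blade_idx := (A :\: B) :|: (B :\: A).

Definition cmul (x y : mv) : mv :=
  [ffun C => \sum_(A : blade_idx) \sum_(B : blade_idx)
       (if symdiff A B == C then bsign A B * x A * y B else 0)].

Definition blade (A : blade_idx) : mv := [ffun B => (B == A)%:R].

Definition cone : mv := blade set0.

Definition cscale (c : R) (x : mv) : mv := [ffun A => c * x A].

Definition gen (i : nat) : mv := blade [set (inord i.-1 : 'I_15)].

Definition eprod (s : seq nat) : mv := foldr (fun i acc => cmul (gen i) acc) cone s.

End Cl15.

Definition Phi_terms : seq (seq nat) :=
  [:: [:: 1;2;3;4;5;6;7];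
      [:: 1;2;3;8;9;10;11];
      [:: 1;4;5;8;9;12;13];
      [:: 1;6;7;8;9;14;15];
      [:: 2;4;6;8;10;12;14];
      [:: 2;5;7;8;10;13;15];
      [:: 3;4;7;8;11;12;15];
      [:: 3;5;6;8;11;13;14];
      [:: 1;2;3;12;13;14;15];
      [:: 1;4;5;10;11;14;15];
      [:: 1;6;7;10;11;12;13];
      [:: 2;4;6;9;11;13;15];
      [:: 2;5;7;9;11;12;14];
      [:: 3;4;7;9;10;13;14];
      [:: 3;5;6;9;10;12;15] ].

Definition PhiStar_terms : seq (seq nat) :=
  [:: [:: 1;2;4;7;8;11;13;14];
      [:: 1;2;4;7;9;10;12;15];
      [:: 1;2;5;6;8;11;12;15];
      [:: 1;2;5;6;9;10;13;14];
      [:: 1;3;4;6;8;10;13;15];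
      [:: 1;3;4;6;9;11;12;14];
      [:: 1;3;5;7;8;10;12;14];
      [:: 1;3;5;7;9;11;13;15];
      [:: 2;3;4;5;8;9;14;15];
      [:: 2;3;4;5;10;11;12;13];
      [:: 2;3;6;7;8;9;12;13];
      [:: 2;3;6;7;10;11;14;15];
      [:: 4;5;6;7;8;9;10;11];
      [:: 4;5;6;7;12;13;14;15];
      [:: 8;9;10;11;12;13;14;15] ].

(* The seven pairings C1,C2,C3,M1,M2,M3,M4, as pairs of (0-based) positions
   into mu_1 < ... < mu_8. *)
Definition pairings : seq (seq (nat * nat)) :=
  [:: [:: (0,1); (2,3); (4,5); (6,7)];
      [:: (0,2); (1,3); (4,6); (5,7)];
      [:: (0,3); (1,2); (4,7); (5,6)];
      [:: (0,4); (1,5); (2,6); (3,7)];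
      [:: (0,5); (1,4); (2,7); (3,6)];
      [:: (0,6); (1,7); (2,4); (3,5)];
      [:: (0,7); (1,6); (2,5); (3,4)] ].

(* The four sign patterns (true = minus sign). *)
Definition sign_patterns : seq (seq bool) :=
  [:: [:: false; false; false; false];
      [:: false; false; true; true];
      [:: false; true; false; true];
      [:: false; true; true; false] ].

Section Rotors.
Variable R : realFieldType.
Local Notation mv := {ffun blade_idx -> R}.

Definition Phi_k (k : 'I_15) : mv := eprod R (nth [::] Phi_terms k).
Definition Phi : mv := \sum_(k < 15) Phi_k k.

Definition planes (t : 'I_15) (p : 'I_7) : seq (nat * nat) :=
  let mu := nth [::] PhiStar_terms t in
  [seq (nth 0%N mu q.1, nth 0%N mu q.2) | q <- nth [::] pairings p].

Definition plane_set (t : 'I_15) (p : 'I_7) : {set {set 'I_15}} :=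
  [set S in [seq [set (inord ab.1.-1 : 'I_15); (inord ab.2.-1 : 'I_15)]
             | ab <- planes t p]].

Definition rotor (t : 'I_15) (p : 'I_7) (s : 'I_4) : mv :=
  cscale (1 / 4 : R)
  (foldr (fun f acc => cmul f acc) (cone R)
    [seq cone R + cscale ((-1) ^+ (eb.2 : bool) : R) (eprod R [:: eb.1.1; eb.1.2])
       | eb : (nat * nat) * bool <- zip (planes t p) (nth [::] sign_patterns s)]).

End Rotors.

Notation mvT R := {ffun blade_idx -> R}.

(* Main.v *)
Require Import Defs.
From HB Require Import structures.
From mathcomp Require Import all_boot all_order all_algebra.
From mathcomp Require Import ring zify.
From Stdlib Require Import FunctionalExtensionality.
Import Order.TTheory GRing.Theory Num.Theory.
Local Open Scope ring_scope.

Section Alg.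
Variable R : realFieldType.
Local Notation mv := {ffun blade_idx -> R}.

Definition bl (A : blade_idx) : mv := blade R A.

Lemma cmulE (x y : mv) : cmul x y =
  \sum_(A : blade_idx) \sum_(B : blade_idx) cscale (x A * y B * bsign R A B) (bl (symdiff A B)).
Proof.
apply/ffunP => C; rewrite !ffunE sum_ffunE; apply: eq_bigr => A _.
rewrite sum_ffunE; apply: eq_bigr => B _; rewrite !ffunE.
rewrite eq_sym; case: eqP => _; rewrite ?mulr1 ?mulr0 //; by rewrite [RHS]mulrC mulrA.
Qed.

Lemma cscaleA (a b : R) (x : mv) : cscale a (cscale b x) = cscale (a * b) x.
Proof. by apply/ffunP => C; rewrite !ffunE mulrA. Qed.
Lemma cscale_sum I (r : seq I) (a : R) (F : I -> mv) :
  cscale a (\sum_(i <- r) F i) = \sum_(i <- r) cscale a (F i).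
Proof. apply/ffunP => C; rewrite !ffunE !sum_ffunE mulr_sumr; apply: eq_bigr => i _; by rewrite ffunE. Qed.
Lemma cscaleDl (a b : R) (x : mv) : cscale (a + b) x = cscale a x + cscale b x.
Proof. by apply/ffunP => C; rewrite !ffunE mulrDl. Qed.
Lemma cscaleDr (a : R) (x y : mv) : cscale a (x + y) = cscale a x + cscale a y.
Proof. by apply/ffunP => C; rewrite !ffunE mulrDr. Qed.
Lemma cscale1 (x : mv) : cscale 1 x = x.
Proof. by apply/ffunP => C; rewrite !ffunE mul1r. Qed.
Lemma cscale0 (x : mv) : cscale 0 x = 0.
Proof. by apply/ffunP => C; rewrite !ffunE mul0r. Qed.
Lemma cscaleN (a : R) (x : mv) : cscale (- a) x = - cscale a x.
Proof. by apply/ffunP => C; rewrite !ffunE mulNr. Qed.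

Lemma decomp (x : mv) : x = \sum_(A : blade_idx) cscale (x A) (bl A).
Proof.
apply/ffunP => C; rewrite sum_ffunE (bigD1 C) //= big1 ?addr0.
  by rewrite !ffunE eqxx mulr1.
by move=> A /negbTE hA; rewrite !ffunE eq_sym hA mulr0.
Qed.

Lemma cmulDl (x1 x2 y : mv) : cmul (x1 + x2) y = cmul x1 y + cmul x2 y.
Proof.
rewrite !cmulE -big_split; apply: eq_bigr => A _; rewrite -big_split; apply: eq_bigr => B _.
by rewrite ffunE !mulrDl cscaleDl.
Qed.
Lemma cmulDr (x y1 y2 : mv) : cmul x (y1 + y2) = cmul x y1 + cmul x y2.
Proof.
rewrite !cmulE -big_split; apply: eq_bigr => A _; rewrite -big_split; apply: eq_bigr => B _.
by rewrite ffunE !mulrDr !mulrDl cscaleDl.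
Qed.
Lemma cmul0l (y : mv) : cmul 0 y = 0.
Proof. rewrite cmulE big1 // => A _; rewrite big1 // => B _; by rewrite ffunE !mul0r cscale0. Qed.
Lemma cmul0r (y : mv) : cmul y 0 = 0.
Proof. rewrite cmulE big1 // => A _; rewrite big1 // => B _; by rewrite ffunE !mulr0 !mul0r cscale0. Qed.
Lemma cmulZl a (x y : mv) : cmul (cscale a x) y = cscale a (cmul x y).
Proof.
rewrite !cmulE cscale_sum; apply: eq_bigr => A _; rewrite cscale_sum; apply: eq_bigr => B _.
by rewrite ffunE cscaleA !mulrA.
Qed.
Lemma cmulZr a (x y : mv) : cmul x (cscale a y) = cscale a (cmul x y).
Proof.
rewrite !cmulE cscale_sum; apply: eq_bigr => A _; rewrite cscale_sum; apply: eq_bigr => B _.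
by rewrite ffunE cscaleA; congr cscale; rewrite mulrCA !mulrA.
Qed.
Lemma cmul_suml I (r : seq I) (F : I -> mv) y :
  cmul (\sum_(i <- r) F i) y = \sum_(i <- r) cmul (F i) y.
Proof. elim: r => [|i r IH]; rewrite ?big_nil ?cmul0l // !big_cons cmulDl IH //. Qed.
Lemma cmul_sumr I (r : seq I) (F : I -> mv) y :
  cmul y (\sum_(i <- r) F i) = \sum_(i <- r) cmul y (F i).
Proof. elim: r => [|i r IH]; rewrite ?big_nil ?cmul0r // !big_cons cmulDr IH //. Qed.

Lemma cmul_blade A B : cmul (bl A) (bl B) = cscale (bsign R A B) (bl (symdiff A B)).
Proof.
rewrite cmulE (bigD1 A) //= [X in _ + X = _]big1 ?addr0; last first.
  move=> A' /negbTE hA; rewrite big1 // => B' _; by rewrite !ffunE hA !mul0r cscale0.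
rewrite (bigD1 B) //= [X in _ + X = _]big1 ?addr0; last first.
  move=> B' /negbTE hB; by rewrite !ffunE hB mulr0 mul0r cscale0.
by rewrite !ffunE !eqxx !mul1r.
Qed.

Definition sdg {T : finType} (A B : {set T}) := (A :\: B) :|: (B :\: A).
Lemma odd_sdg (T : finType) (A B : {set T}) : odd #|sdg A B| = odd #|A| (+) odd #|B|.
Proof.
have e1 := cardsID B A. have e2 := cardsID A B.
have e3 := cardsUI (A :\: B) (B :\: A).
have h0 : (A :\: B) :&: (B :\: A) = set0.
  by apply/setP => x; rewrite !inE; case: (x \in A); case: (x \in B).
rewrite h0 cards0 addn0 in e3. rewrite /sdg e3 -e1 -e2 setIC !oddD.
by case: (odd _); case: (odd _); case: (odd _).
Qed.

Definition pairs (X Y : blade_idx) : {set 'I_15 * 'I_15} :=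
  [set p : 'I_15 * 'I_15 | (p.1 \in X) && (p.2 \in Y) && (p.2 < p.1)%N].
Lemma bsignE X Y : bsign R X Y = (-1) ^+ #|pairs X Y|. Proof. by []. Qed.
Lemma pairs_l X Y Z : pairs (symdiff X Y) Z = sdg (pairs X Z) (pairs Y Z).
Proof.
apply/setP => p; rewrite !inE.
by case: (p.1 \in X); case: (p.1 \in Y); case: (p.2 \in Z); case: (p.2 < p.1)%N.
Qed.
Lemma pairs_r X Y Z : pairs X (symdiff Y Z) = sdg (pairs X Y) (pairs X Z).
Proof.
apply/setP => p; rewrite !inE.
by case: (p.1 \in X); case: (p.2 \in Y); case: (p.2 \in Z); case: (p.2 < p.1)%N.
Qed.
Lemma symdiffA X Y Z : symdiff (symdiff X Y) Z = symdiff X (symdiff Y Z).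
Proof.
apply/setP => p; rewrite !inE.
by case: (p \in X); case: (p \in Y); case: (p \in Z).
Qed.

Lemma cocycle A B C :
  bsign R A B * bsign R (symdiff A B) C = bsign R B C * bsign R A (symdiff B C).
Proof.
rewrite !bsignE -!exprD -signr_odd -[RHS]signr_odd; congr (_ ^+ _).
rewrite !oddD pairs_l pairs_r !odd_sdg.
by case: (odd #|pairs A B|); case: (odd #|pairs A C|); case: (odd #|pairs B C|).
Qed.

Lemma cmul_assoc_b A B C : cmul (cmul (bl A) (bl B)) (bl C) = cmul (bl A) (cmul (bl B) (bl C)).
Proof.
by rewrite cmul_blade cmulZl cmul_blade cmul_blade cmulZr cmul_blade !cscaleA cocycle symdiffA.
Qed.

Lemma cmulA (x y z : mv) : cmul (cmul x y) z = cmul x (cmul y z).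
Proof.
have h1 A B z' : cmul (cmul (bl A) (bl B)) z' = cmul (bl A) (cmul (bl B) z').
  rewrite [z']decomp !cmul_sumr; apply: eq_bigr => C _.
  by rewrite !cmulZr cmul_assoc_b.
have h2 A y' z' : cmul (cmul (bl A) y') z' = cmul (bl A) (cmul y' z').
  rewrite [y']decomp cmul_sumr !cmul_suml cmul_sumr; apply: eq_bigr => B _.
  by rewrite cmulZr !cmulZl cmulZr h1.
rewrite [x]decomp !cmul_suml; apply: eq_bigr => A _.
by rewrite !cmulZl h2.
Qed.

Lemma bsign0l B : bsign R set0 B = 1.
Proof. rewrite bsignE (_ : pairs set0 B = set0) ?cards0 //; apply/setP => p; by rewrite !inE. Qed.
Lemma bsign0r B : bsign R B set0 = 1.
Proof. rewrite bsignE (_ : pairs B set0 = set0) ?cards0 //; apply/setP => p; by rewrite !inE andbF. Qed.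

Lemma cmul1l (x : mv) : cmul (cone R) x = x.
Proof.
rewrite [x]decomp cmul_sumr; apply: eq_bigr => A _.
rewrite cmulZr cmul_blade bsign0l cscale1 (_ : symdiff set0 A = A) //.
by apply/setP => p; rewrite !inE; case: (p \in A).
Qed.
Lemma cmul1r (x : mv) : cmul x (cone R) = x.
Proof.
rewrite [x]decomp cmul_suml; apply: eq_bigr => A _.
rewrite cmulZl cmul_blade bsign0r cscale1 (_ : symdiff A set0 = A) //.
by apply/setP => p; rewrite !inE; case: (p \in A).
Qed.

End Alg.

Definition sparse := seq (seq bool * int).

Fixpoint xorl (a b : seq bool) : seq bool :=
  match a, b with
  | [::], _ => b
  | _, [::] => a
  | x :: a', y :: b' => (x (+) y) :: xorl a' b'
  end.

Fixpoint gpn (n : nat) (a b : seq bool) (c : bool) : bool :=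
  match n with
  | 0 => false
  | n'.+1 => (head false a && c) (+) gpn n' (behead a) (behead b) (c (+) head false b)
  end.
Definition gp a b := gpn 15 a b false.

Definition kset (k : seq bool) : blade_idx := [set i : 'I_15 | nth false k i].

Definition sgn (b : bool) : int := if b then -1 else 1.

Definition smul (s1 s2 : sparse) : sparse :=
  flatten [seq [seq (xorl x.1 y.1, sgn (gp x.1 y.1) * x.2 * y.2) | y <- s2] | x <- s1].

Fixpoint keq (a b : seq bool) : bool :=
  match a, b with
  | [::], [::] => true
  | x :: a', y :: b' => if x then (if y then keq a' b' else false) else (if y then false else keq a' b')
  | _, _ => false
  end.
Lemma keqE a b : keq a b = (a == b).
Proof. elim: a b => [|x a IH] [|y b] //=; rewrite eqseq_cons IH; by case: x; case: y. Qed.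

Fixpoint ins (k : seq bool) (c : int) (s : sparse) : sparse :=
  match s with
  | [::] => [:: (k, c)]
  | x :: s' => if keq x.1 k then (x.1, x.2 + c) :: s' else x :: ins k c s'
  end.
Definition norm (s : sparse) : sparse :=
  filter (fun x => x.2 != 0) (foldr (fun x acc => ins x.1 x.2 acc) [::] s).
Definition sscale (c : int) (s : sparse) : sparse := [seq (x.1, c * x.2) | x <- s].
Definition sone : sparse := [:: (nseq 15 false, 1)].

Lemma nth_xorl a b i : nth false (xorl a b) i = nth false a i (+) nth false b i.
Proof.
elim: a b i => [|x a IH] [|y b] [|i] //=; by rewrite addbF.
Qed.

Lemma gpn_spec n : forall a b c,
  gpn n a b (odd c) = odd (\sum_(i < n) nth false a i * (c + \sum_(j < i) nth false b j))%N.
Proof.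
elim: n => [|n IH] a b c; first by rewrite big_ord0.
rewrite big_ord_recl /= big_ord0 addn0.
have -> : odd c (+) head false b = odd (c + nth false b 0).
  rewrite oddD oddb; case: b => //=. 
rewrite IH oddD oddM oddb.
have -> : head false a = nth false a 0 by case: a.
congr addb.
congr odd; apply: eq_bigr => i _.
rewrite /bump /= add1n big_ord_recl -!nth_behead addnA; congr (_ * (_ + _))%N.
apply: eq_bigr => j _; by rewrite nth_behead.
Qed.

Lemma card_pairs a b :
  #|pairs (kset a) (kset b)| = (\sum_(i < 15) nth false a i * (0 + \sum_(j < i) nth false b j))%N.
Proof.
have -> : (\sum_(i < 15) nth false a i * (0 + \sum_(j < i) nth false b j) =
   \sum_(i < 15) \sum_(j < 15) (nth false a i && nth false b j && (j < i)))%N.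
  apply: eq_bigr => i _.
  rewrite add0n (big_ord_widen 15 (fun j => nth false b j : nat)) ?(ltnW (ltn_ord i)) //.
  rewrite big_distrr /= big_mkcond; apply: eq_bigr => j _.
  by case: (nth false a i); case: (nth false b j); case: (j < i)%N.
rewrite pair_bigA /= -sum1_card big_mkcond /=; apply: eq_bigr => [[i j]] _ /=.
by rewrite !inE.
Qed.

Lemma gpE a b : gp a b = odd #|pairs (kset a) (kset b)|.
Proof. by rewrite card_pairs -gpn_spec. Qed.

Lemma kset_xor a b : symdiff (kset a) (kset b) = kset (xorl a b).
Proof.
apply/setP => i; rewrite !inE nth_xorl.
by case: (nth false a i); case: (nth false b i).
Qed.

Definition keyg (i : nat) : seq bool := mkseq (fun j => j == (if (i.-1 < 15)%N then i.-1 else 0%N)) 15.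

Lemma set_keyg i : [set (inord i.-1 : 'I_15)] = kset (keyg i).
Proof.
apply/setP => x; rewrite !inE nth_mkseq // -val_eqE /= /inord val_insubd /=; by case: ifP.
Qed.

Lemma kset_nil : kset (nseq 15 false) = set0.
Proof. by apply/setP => x; rewrite !inE nth_nseq if_same. Qed.

Section Interp.
Variable R : realFieldType.
Local Notation mv := {ffun blade_idx -> R}.

Definition interp (s : sparse) : mv := \sum_(x <- s) cscale (x.2%:~R) (bl R (kset x.1)).

Lemma sgnE b : (sgn b)%:~R = (-1) ^+ b :> R.
Proof. by case: b => /=; rewrite ?expr1 ?expr0 ?rmorphN1 ?rmorph1. Qed.

Lemma bsign_gp a b : bsign R (kset a) (kset b) = (sgn (gp a b))%:~R.
Proof. by rewrite sgnE gpE signr_odd. Qed.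

Lemma interp_smul s1 s2 : interp (smul s1 s2) = cmul (interp s1) (interp s2).
Proof.
rewrite /interp /smul big_flatten /= big_map cmul_suml; apply: eq_bigr => x _.
rewrite big_map cmul_sumr; apply: eq_bigr => y _ /=.
rewrite cmulZl cmulZr cmul_blade cscaleA cscaleA kset_xor bsign_gp; congr cscale.
by rewrite !intrM -mulrA mulrC.
Qed.

Lemma interp_cat s1 s2 : interp (s1 ++ s2) = interp s1 + interp s2.
Proof. by rewrite /interp big_cat. Qed.

Lemma interp_cons x s : interp (x :: s) = cscale (x.2%:~R) (bl R (kset x.1)) + interp s.
Proof. by rewrite /interp big_cons. Qed.

Lemma interp_ins k c s : interp (ins k c s) = cscale (c%:~R) (bl R (kset k)) + interp s.
Proof.
elim: s => [|x s IH] /=; first by rewrite interp_cons /interp big_nil.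
rewrite keqE; case: eqP => [e|_]; rewrite !interp_cons ?IH /=.
  by rewrite e rmorphD cscaleDl addrA [X in X + _]addrC.
by rewrite addrCA.
Qed.

Lemma interp_filter s : interp (filter (fun x => x.2 != 0) s) = interp s.
Proof.
elim: s => [|x s IH] //=; case: eqP => [e|_] /=; rewrite !interp_cons ?IH //.
by rewrite e mulr0z cscale0 add0r.
Qed.

Lemma interp_norm s : interp (norm s) = interp s.
Proof.
rewrite /norm interp_filter.
elim: s => [|x s IH] //=; by rewrite interp_ins IH interp_cons.
Qed.

Lemma interp_sscale c s : interp (sscale c s) = cscale (c%:~R) (interp s).
Proof.
rewrite /interp big_map cscale_sum; apply: eq_bigr => x _ /=.
by rewrite cscaleA rmorphM.
Qed.

Lemma interp_sone : interp sone = cone R.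
Proof. by rewrite /interp big_cons big_nil addr0 /= kset_nil rmorph1 cscale1. Qed.

Lemma iszero_eq s1 s2 : norm (s1 ++ sscale (-1) s2) = [::] -> interp s1 = interp s2.
Proof.
move=> h; have := interp_norm (s1 ++ sscale (-1) s2).
rewrite h interp_cat interp_sscale rmorphN1 cscaleN cscale1 /interp big_nil => /eqP.
by rewrite eq_sym subr_eq0 => /eqP.
Qed.

End Interp.

Definition sgen (i : nat) : sparse := [:: (keyg i, 1)].
Definition seprod (l : seq nat) : sparse := foldr (fun i acc => smul (sgen i) acc) sone l.

Definition splanes (t p : nat) : seq (nat * nat) :=
  let mu := nth [::] PhiStar_terms t in
  [seq (nth 0%N mu q.1, nth 0%N mu q.2) | q <- nth [::] pairings p].

Definition sfac (neg : bool) (eb : (nat * nat) * bool) : sparse :=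
  sone ++ sscale (sgn (neg (+) eb.2)) (seprod [:: eb.1.1; eb.1.2]).
Definition srot (neg : bool) (t p s : nat) : sparse :=
  foldr smul sone [seq sfac neg eb | eb <- zip (splanes t p) (nth [::] sign_patterns s)].

Definition nR t p s := norm (srot false t p s).
Definition nRi t p s := norm (srot true t p s).
Definition sPhi : sparse := flatten [seq seprod l | l <- Phi_terms].

Definition coef (s : sparse) (k : seq bool) : int :=
  foldr (fun x acc => (if keq x.1 k then x.2 else 0) + acc) 0 s.

Definition phikey (k : nat) : seq bool := (head ([::], 0) (norm (seprod (nth [::] Phi_terms k)))).1.

Definition stotal (a b : sparse) : sparse := norm (smul (norm (smul a sPhi)) b).
Definition etan (tot : sparse) (k : nat) : bool := coef tot (phikey k) < 0.
Definition stgt (tot : sparse) : sparse :=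
  flatten [seq sscale (sgn (etan tot k)) (seprod (nth [::] Phi_terms k)) | k <- iota 0 15].

Definition iszero (s : sparse) : bool := nilp (norm s).

Definition alltr : seq (nat * nat * nat) :=
  flatten [seq flatten [seq [seq (t, p, s) | s <- iota 0 4] | p <- iota 0 7] | t <- iota 0 15].
Definition bivterms (s : sparse) : sparse := [seq x <- s | count id x.1 == 2%N].
Definition tblc : seq (nat * nat * nat * sparse) :=
  [seq (a, bivterms (nR a.1.1 a.1.2 a.2)) | a <- alltr].
Definition decT (tbl : seq (nat * nat * nat * sparse)) (f : seq bool -> int) : nat * nat * nat :=
  (head ((0,0,0)%N, [::]) [seq x <- tbl | all (fun y => f y.1 == y.2) x.2]).1.
Definition kwrap (s : sparse) (k : seq bool) : int := if size k == 15%N then coef s k else 0.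
Definition chkdec : bool :=
  let tbl := tblc in
  all (fun t => all (fun p => all (fun s => let a := nR t p s in
     all (fun x => size x.1 == 15%N) a && (decT tbl (kwrap a) == (t, p, s)))
     (iota 0 4)) (iota 0 7)) (iota 0 15).

Definition valid (i j : nat) : bool := [&& (0 < i)%N, (i < j)%N & (j <= 15)%N].
Definition alltp : seq (nat * nat) := flatten [seq [seq (t, p) | p <- iota 0 7] | t <- iota 0 15].
Definition dec2 (g : nat -> nat -> bool) : nat * nat :=
  head (0,0)%N [seq tp <- alltp | all (fun ab => g ab.1 ab.2) (splanes tp.1 tp.2)].
Definition chkdec2 : bool :=
  all (fun t => all (fun p => all (fun ab => valid ab.1 ab.2) (splanes t p) &&
     (dec2 (fun i j => valid i j && ((i, j) \in splanes t p)) == (t, p))) (iota 0 7)) (iota 0 15).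

Lemma q16 (R : realFieldType) : (1/4 : R) * (1/4) * (16%:~R) = 1.
Proof. rewrite -[16%:~R]/(16%:R : R). by field. Qed.
Lemma q4 (R : realFieldType) : (4 : R) * (1/4) = 1.
Proof. by field. Qed.

Section Main.
Variable R : realFieldType.
Local Notation mv := {ffun blade_idx -> R}.

Lemma interp_sgen i : interp R (sgen i) = gen R i.
Proof.
by rewrite /interp /sgen big_cons big_nil addr0 /= rmorph1 cscale1 /gen set_keyg.
Qed.

Lemma eprod_interp l : eprod R l = interp R (seprod l).
Proof.
elim: l => [|i l IH] /=; first by rewrite interp_sone.
by rewrite interp_smul -IH interp_sgen.
Qed.

Lemma rotor_interp (t : 'I_15) (p : 'I_7) (s : 'I_4) :
  rotor R t p s = cscale (1/4) (interp R (nR t p s)).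
Proof.
rewrite /nR interp_norm /rotor /srot; congr cscale.
rewrite (_ : planes t p = splanes t p) //.
elim: (zip _ _) => [|eb l IH] /=; first by rewrite interp_sone.
rewrite interp_smul IH; congr cmul.
by rewrite /sfac interp_cat interp_sone interp_sscale sgnE -eprod_interp.
Qed.

Lemma Phi_interp : Phi R = interp R sPhi.
Proof.
rewrite /interp /sPhi big_flatten big_map.
rewrite /Phi (big_nth [::]) big_mkord /=.
apply: eq_bigr => k _; by rewrite /Phi_k eprod_interp.
Qed.

Lemma stgt_interp tot (eta : 'I_15 -> bool) :
  (forall k : 'I_15, eta k = etan tot k) ->
  interp R (stgt tot) = \sum_(k < 15) cscale ((-1) ^+ eta k) (Phi_k R k).
Proof.
move=> he; rewrite /interp /stgt big_flatten big_map.
rewrite (_ : iota 0 15 = index_iota 0 15) // big_mkord; apply: eq_bigr => k _.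
by rewrite -/(interp R _) interp_sscale sgnE he /Phi_k eprod_interp.
Qed.

End Main.

Definition pS (eb : (nat * nat) * bool) : sparse := seprod [:: eb.1.1; eb.1.2].
Definition pc (eb : (nat * nat) * bool) : int := sgn eb.2.
Definition sstep (S : sparse) (c : int) (X : sparse) : bool * sparse :=
  let EX := norm (smul S X) in let XE := norm (smul X S) in
  if iszero (EX ++ sscale (-1) XE) then (true, sscale 2 X)
  else if iszero (EX ++ sscale (-1) (sscale (-1) XE)) then (true, sscale (2 * c) EX)
  else (false, X).
Definition sconjl (l : seq ((nat * nat) * bool)) (X : sparse) : bool * sparse :=
  foldr (fun eb acc => let r := sstep (pS eb) (pc eb) acc.2 in (acc.1 && r.1, r.2)) (true, X) l.
Definition sqchk (eb : (nat * nat) * bool) : bool :=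
  iszero (smul (pS eb) (pS eb) ++ sscale (-1) (sscale (-1) sone)).
Definition pl (t p s : nat) := zip (splanes t p) (nth [::] sign_patterns s).
Definition ctot (l : seq ((nat * nat) * bool)) : bool * sparse :=
  let rs := [seq sconjl l (seprod (nth [::] Phi_terms k)) | k <- iota 0 15] in
  (all fst rs, flatten (map snd rs)).
Definition chk2 (t p s : nat) : bool :=
  let l := pl t p s in let ct := ctot l in
  [&& size l == 4%N, all sqchk l, ct.1 &
      iszero (ct.2 ++ sscale (-1) (sscale 16 (stgt ct.2)))].
Definition allchk2 : bool :=
  all (fun t => all (fun p => all (fun s => chk2 t p s) (iota 0 4)) (iota 0 7)) (iota 0 15).

Section Conj.
Variable R : realFieldType.
Local Notation mv := {ffun blade_idx -> R}.

Definition fe (eb : (nat * nat) * bool) : mv :=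
  cone R + cscale ((-1) ^+ eb.2) (eprod R [:: eb.1.1; eb.1.2]).
Definition fe' (eb : (nat * nat) * bool) : mv :=
  cone R + cscale (- (-1) ^+ eb.2) (eprod R [:: eb.1.1; eb.1.2]).
Definition Fp l := foldr (fun eb acc => cmul (fe eb) acc) (cone R) l.
Definition Gp l := foldr (fun eb acc => cmul acc (fe' eb)) (cone R) l.
Definition conjl l (X : mv) := foldr (fun eb acc => cmul (cmul (fe eb) acc) (fe' eb)) X l.

Lemma ffg (E : mv) (b : bool) : cmul E E = cscale (-1) (cone R) ->
  cmul (cone R + cscale ((-1) ^+ b) E) (cone R + cscale (- (-1) ^+ b) E) = cscale 2 (cone R) /\
  cmul (cone R + cscale (- (-1) ^+ b) E) (cone R + cscale ((-1) ^+ b) E) = cscale 2 (cone R).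
Proof.
move=> h; rewrite !cmulDl !cmulDr !cmul1l !cmul1r !cmulZl !cmulZr h !cscaleA.
by split; apply/ffunP => A; rewrite !ffunE; case: b; rewrite ?expr0 ?expr1; ring.
Qed.

Lemma step_comm (E X : mv) (b : bool) : cmul E E = cscale (-1) (cone R) ->
  cmul X E = cmul E X ->
  cmul (cmul (cone R + cscale ((-1) ^+ b) E) X) (cone R + cscale (- (-1) ^+ b) E) = cscale 2 X.
Proof.
move=> h hc; rewrite !cmulDl !cmulDr !cmul1l !cmul1r !cmulZl !cmulZr hc cmulA hc -cmulA h cmulZl cmul1l !cscaleA.
by apply/ffunP => A; rewrite !ffunE; case: b; rewrite ?expr0 ?expr1; ring.
Qed.

Lemma step_anti (E X : mv) (b : bool) : cmul E E = cscale (-1) (cone R) ->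
  cmul X E = cscale (-1) (cmul E X) ->
  cmul (cmul (cone R + cscale ((-1) ^+ b) E) X) (cone R + cscale (- (-1) ^+ b) E) =
  cscale (2 * (-1) ^+ b) (cmul E X).
Proof.
move=> h hc; rewrite !cmulDl !cmulDr !cmul1l !cmul1r !cmulZl !cmulZr hc cmulA hc cmulZr -cmulA h cmulZl cmul1l !cscaleA.
by apply/ffunP => A; rewrite !ffunE; case: b; rewrite ?expr0 ?expr1; ring.
Qed.

Lemma sqchk_ok eb : sqchk eb -> cmul (eprod R [:: eb.1.1; eb.1.2]) (eprod R [:: eb.1.1; eb.1.2]) = cscale (-1) (cone R).
Proof.
move=> /nilP h; have := iszero_eq R _ _ h.
by rewrite interp_smul interp_sscale interp_sone /pS -eprod_interp rmorphN1.
Qed.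

Lemma FG l : all sqchk l ->
  cmul (Fp l) (Gp l) = cscale (2 ^+ size l) (cone R) /\
  cmul (Gp l) (Fp l) = cscale (2 ^+ size l) (cone R).
Proof.
elim: l => [|eb l IH] /=; first by rewrite cmul1l expr0 cscale1.
move=> /andP [/sqchk_ok hE /IH [h1 h2]].
have [f1 f2] := ffg _ eb.2 hE.
split.
  rewrite cmulA -[cmul (Fp l) (cmul (Gp l) (fe' eb))]cmulA h1 cmulZl cmul1l cmulZr.
  by rewrite /fe /fe' f1 cscaleA exprSr.
rewrite cmulA -[cmul (fe' eb) (cmul (fe eb) (Fp l))]cmulA /fe /fe' f2 cmulZl cmul1l cmulZr.
by rewrite -/(Fp l) h2 cscaleA exprS.
Qed.

Lemma conjlE l X : cmul (cmul (Fp l) X) (Gp l) = conjl l X.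
Proof.
elim: l => [|eb l IH] /=; first by rewrite cmul1l cmul1r.
rewrite -IH; rewrite !cmulA; congr cmul; rewrite -!cmulA; congr cmul; by rewrite !cmulA.
Qed.

Lemma sstep_ok eb X : sqchk eb -> (sstep (pS eb) (pc eb) X).1 ->
  cmul (cmul (fe eb) (interp R X)) (fe' eb) = interp R (sstep (pS eb) (pc eb) X).2.
Proof.
move=> /sqchk_ok hE; rewrite /sstep /fe /fe'.
have eE : interp R (pS eb) = eprod R [:: eb.1.1; eb.1.2] by rewrite /pS eprod_interp.
case: ifP => [/nilP h1 _|_].
  have := iszero_eq R _ _ h1; rewrite !interp_norm (interp_smul _ (pS eb) X) (interp_smul _ X (pS eb)) eE => hc.
  by rewrite (step_comm _ _ _ hE (esym hc)) interp_sscale.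
case: ifP => [/nilP h2 _|_] //.
have := iszero_eq R _ _ h2; rewrite interp_sscale !interp_norm (interp_smul _ (pS eb) X) (interp_smul _ X (pS eb)) rmorphN1 eE => hc.
rewrite (step_anti _ _ _ hE) ?interp_sscale ?interp_norm ?(interp_smul _ (pS eb) X) ?eE.
  by rewrite intrM /pc sgnE.
by rewrite hc cscaleA mulrN1 opprK cscale1.
Qed.

Lemma sconjl_ok l X : all sqchk l -> (sconjl l X).1 -> conjl l (interp R X) = interp R (sconjl l X).2.
Proof.
elim: l => [|eb l IH] //= /andP [hs hl] /andP [h1 h2].
by rewrite IH // sstep_ok.
Qed.

End Conj.

Lemma allchk2_ok : allchk2 = true. Proof. vm_cast_no_check (@eq_refl bool true). Qed.
Lemma chkdec_ok : chkdec = true. Proof. vm_cast_no_check (@eq_refl bool true). Qed.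
Lemma chkdec2_ok : chkdec2 = true. Proof. vm_cast_no_check (@eq_refl bool true). Qed.


Lemma memI {n} (i : 'I_n) : (val i \in iota 0 n). 
Proof. by rewrite mem_iota leq0n add0n ltn_ord. Qed.

Lemma chk2_at (t : 'I_15) (p : 'I_7) (s : 'I_4) : chk2 t p s.
Proof.
move: allchk2_ok => /allP /(_ _ (memI t)) /allP /(_ _ (memI p)) /allP /(_ _ (memI s)) h; exact: h.
Qed.

Lemma dec_at (t : 'I_15) (p : 'I_7) (s : 'I_4) :
  all (fun x => size x.1 == 15%N) (nR t p s) /\ decT tblc (kwrap (nR t p s)) = (val t, val p, val s).
Proof.
move: chkdec_ok => /allP /(_ _ (memI t)) /allP /(_ _ (memI p)) /allP /(_ _ (memI s)) /andP [h /eqP h'].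
split; [exact: h | exact: h'].
Qed.

Lemma dec2_at (t : 'I_15) (p : 'I_7) :
  all (fun ab => valid ab.1 ab.2) (splanes t p) /\
  dec2 (fun i j => valid i j && ((i, j) \in splanes t p)) = (val t, val p).
Proof.
move: chkdec2_ok => /allP /(_ _ (memI t)) /allP /(_ _ (memI p)) /andP [h /eqP h']; split; [exact: h | exact: h'].
Qed.

Section Fin.
Variable R : realFieldType.

Lemma ctot_interp l : interp R (ctot l).2 =
  \sum_(k < 15) interp R (sconjl l (seprod (nth [::] Phi_terms k))).2.
Proof.
by rewrite /ctot /interp big_flatten big_map big_map (_ : iota 0 15 = index_iota 0 15) // big_mkord.
Qed.

Lemma q2 : (1/4 : R) * (1/4) * 2 ^+ 4 = 1.
Proof. rewrite !exprS expr0; by field. Qed.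

Lemma part1 (t : 'I_15) (p : 'I_7) (s : 'I_4) :
     (exists Rinv : mvT R,
        cmul (rotor R t p s) Rinv = cone R /\ cmul Rinv (rotor R t p s) = cone R) /\
     (forall Rinv : mvT R,
        cmul (rotor R t p s) Rinv = cone R -> cmul Rinv (rotor R t p s) = cone R ->
        exists eta : 'I_15 -> bool,
          cmul (cmul (rotor R t p s) (Phi R)) Rinv =
          \sum_(k < 15) cscale ((-1) ^+ eta k) (Phi_k R k)).
Proof.
have := chk2_at t p s; rewrite /chk2.
move=> /and4P [/eqP hsz hsq hfl /nilP h4].
have e4 := iszero_eq R _ _ h4.
rewrite interp_sscale in e4.
have rotE : rotor R t p s = cscale (1/4) (Fp R (pl t p s)) by rewrite /rotor foldr_map.
set Ri := cscale (1/4) (Gp R (pl t p s)).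
have [g1 g2] := FG R _ hsq; rewrite hsz in g1 g2.
have r1 : cmul (rotor R t p s) Ri = cone R.
  by rewrite rotE /Ri cmulZl cmulZr g1 !cscaleA q2 cscale1.
have r2 : cmul Ri (rotor R t p s) = cone R.
  by rewrite rotE /Ri cmulZl cmulZr g2 !cscaleA q2 cscale1.
split; first by exists Ri.
move=> Rinv i1 i2.
have -> : Rinv = Ri.
  by rewrite -[Rinv]cmul1l -r2 cmulA i1 cmul1r.
set ct := ctot (pl t p s).
exists (fun k : 'I_15 => etan ct.2 k).
rewrite -(stgt_interp R ct.2) //.
rewrite rotE /Ri cmulZl cmulZl cmulZr.
have -> : cmul (cmul (Fp R (pl t p s)) (Phi R)) (Gp R (pl t p s)) = interp R ct.2.
  rewrite /Phi cmul_sumr cmul_suml /ct ctot_interp; apply: eq_bigr => k _.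
  rewrite conjlE /Phi_k eprod_interp sconjl_ok //.
  have hfl' : all fst [seq sconjl (pl t p s) (seprod (nth [::] Phi_terms k0)) | k0 <- iota 0 15] := hfl.
  move/allP: hfl' => /(_ (sconjl (pl t p s) (seprod (nth [::] Phi_terms k)))); apply.
  by apply/mapP; exists (val k) => //; apply: memI.
by rewrite e4 !cscaleA q16 cscale1.
Qed.

Lemma kset_inj15 a b : size a = 15%N -> size b = 15%N -> (kset a == kset b) = (a == b).
Proof.
move=> ha hb; apply/eqP/eqP => [E|->] //.
apply: (@eq_from_nth _ false); first by rewrite ha hb.
move=> i; rewrite ha => hi.
by have := congr1 (fun S : {set 'I_15} => (Ordinal hi) \in S) E; rewrite !inE.
Qed.

Lemma coef_interp s k : all (fun x => size x.1 == 15%N) s -> size k = 15%N ->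
  (interp R s) (kset k) = (coef s k)%:~R.
Proof.
move=> hs hk; elim: s hs => [|x s IH] /=; first by rewrite /interp big_nil ffunE.
move=> /andP [/eqP hx hs]; rewrite interp_cons !ffunE IH // intrD keqE.
rewrite kset_inj15 // [k == x.1]eq_sym; case: (x.1 == k); by rewrite ?mulr1 ?mulr0 ?mul0r.
Qed.

Lemma rotor_inj : injective (fun tps : 'I_15 * 'I_7 * 'I_4 => rotor R tps.1.1 tps.1.2 tps.2).
Proof.
move=> [[t p] s] [[t' p'] s'] /= E.
rewrite !rotor_interp in E.
have E2 : interp R (nR t p s) = interp R (nR t' p' s').
  by have := congr1 (cscale 4) E; rewrite !cscaleA q4 !cscale1.
have W : kwrap (nR t p s) = kwrap (nR t' p' s').
  apply: functional_extensionality => k; rewrite /kwrap; case: eqP => // hk.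
  apply: (@intr_inj R); rewrite -!coef_interp ?E2 //.
  - by case: (dec_at t' p' s').
  - by case: (dec_at t p s).
have := (dec_at t p s).2; rewrite W (dec_at t' p' s').2 => -[] /val_inj -> /val_inj -> /val_inj -> //.
Qed.

End Fin.

Lemma inord_eq x y : (0 < x <= 15)%N -> (0 < y <= 15)%N ->
  ((inord x.-1 : 'I_15) == inord y.-1) = (x == y).
Proof.
move=> /andP[x0 x1] /andP[y0 y1].
rewrite -val_eqE /= !inordK; try lia.
Qed.

Lemma set2_inj i j a b : valid i j -> valid a b ->
  [set (inord i.-1 : 'I_15); inord j.-1] = [set inord a.-1; inord b.-1] -> (i, j) = (a, b).
Proof.
move=> /and3P[i0 ij j15] /and3P[a0 ab b15] E.
have m1 : (inord i.-1 : 'I_15) \in [set (inord a.-1 : 'I_15); inord b.-1] by rewrite -E !inE eqxx.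
have m2 : (inord j.-1 : 'I_15) \in [set (inord a.-1 : 'I_15); inord b.-1] by rewrite -E !inE eqxx orbT.
have m3 : (inord a.-1 : 'I_15) \in [set (inord i.-1 : 'I_15); inord j.-1] by rewrite E !inE eqxx.
have m4 : (inord b.-1 : 'I_15) \in [set (inord i.-1 : 'I_15); inord j.-1] by rewrite E !inE eqxx orbT.
rewrite !inE !inord_eq in m1 m2 m3 m4; try lia.
move: m1 m2 m3 m4 => /orP[]/eqP h1 /orP[]/eqP h2 /orP[]/eqP h3 /orP[]/eqP h4;
  (have [-> ->] : i = a /\ j = b by lia); done.
Qed.

Definition gg (tp : 'I_15 * 'I_7) (i j : nat) : bool :=
  if valid i j then [set (inord i.-1 : 'I_15); inord j.-1] \in plane_set tp.1 tp.2 else false.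

Lemma gg_spec (tp : 'I_15 * 'I_7) i j : all (fun ab => valid ab.1 ab.2) (splanes tp.1 tp.2) ->
  gg tp i j = valid i j && ((i, j) \in splanes tp.1 tp.2).
Proof.
move=> hall; rewrite /gg; case: ifP => hv //=.
rewrite /plane_set inE; apply/mapP/idP.
  case=> ab hab E.
  have hvab : valid ab.1 ab.2 by move/allP: hall => /(_ _ hab).
  have := set2_inj _ _ _ _ hv hvab E; case: ab hab {E hvab} => a b /= hab [-> ->] //.
by move=> h; exists (i, j).
Qed.

Lemma plane_inj : injective (fun tp : 'I_15 * 'I_7 => plane_set tp.1 tp.2).
Proof.
move=> [t p] [t' p'] /= E.
have G : gg (t, p) = gg (t', p') by rewrite /gg /= E.
have [v1 d1] := dec2_at t p. have [v2 d2] := dec2_at t' p'.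
have S1 : gg (t, p) = (fun i j => valid i j && ((i, j) \in splanes t p)).
  by apply: functional_extensionality => i; apply: functional_extensionality => j; rewrite gg_spec.
have S2 : gg (t', p') = (fun i j => valid i j && ((i, j) \in splanes t' p')).
  by apply: functional_extensionality => i; apply: functional_extensionality => j; rewrite gg_spec.
move: d1; rewrite -S1 G S2 d2 => -[] /val_inj -> /val_inj -> //.
Qed.

Theorem theorem3 (R : realFieldType) :
  (forall (t : 'I_15) (p : 'I_7) (s : 'I_4),
     (exists Rinv : mvT R,
        cmul (rotor R t p s) Rinv = cone R /\ cmul Rinv (rotor R t p s) = cone R) /\
     (forall Rinv : mvT R,
        cmul (rotor R t p s) Rinv = cone R -> cmul Rinv (rotor R t p s) = cone R ->
        exists eta : 'I_15 -> bool,
          cmul (cmul (rotor R t p s) (Phi R)) Rinv =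
          \sum_(k < 15) cscale ((-1) ^+ eta k) (Phi_k R k))) /\
  injective (fun tp : 'I_15 * 'I_7 => plane_set tp.1 tp.2) /\
  injective (fun tps : 'I_15 * 'I_7 * 'I_4 => rotor R tps.1.1 tps.1.2 tps.2).
Proof.
split; first exact: part1.
split; first exact: plane_inj.
exact: rotor_inj.
Qed.
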